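(* Let $s,t,m$ be positive integers with $s\le t$, $s\mid m$, $m\ge t+2$, let $n=m^2$, and let $z=s(\lceil (t+2)/s\rceil-1)$. Let $v(0),\dots,v(m-1)$ be integers with $0\le v(j)\le t-1-(j\bmod s)$ for all $j$ and $v(j)=0$ for $m-z\le j\le m-1$. Then, for any initial configuration of distinct cell values $c_0,\dots,c_{n-1}$, the Block Algorithm (described in the context) terminates, and during its repeat-loop each of the cells $c_0,c_1,\dots,c_{m-3}$ is pushed exactly once.
   Context: Cells $c_0,\dots,c_{n-1}$ are real numbers (indices modulo $n$). For $0\le j\le n-1$ let $l(j)=s\lceil (j-t+1)/s\rceil \bmod n$ and $r(j)=(s\lfloor j/s\rfloor+t-1)\bmod n$. Pushing cell $j$ (''push-to-the-top'') replaces $c_j$ by $\max\{c_{l(j)},c_{l(j)+1},\dots,c_{r(j)}\}+1$ (indices cyclic), leaving other cells unchanged. For $0\le j\le m-3$ define $l'(j)=l(j)$ if $0\le l(j)\le m-3$ and $l'(j)=0$ otherwise, and $r'(j)=r(j)$ if $0\le r(j)\le m-3$ and $r'(j)=m-3$ otherwise. Block Algorithm: (1) push cell $n-1$; (2) set $a_k\leftarrow 0$ for $k=0,\dots,m-3$ and $j\leftarrow 0$; (3) repeat: if $v(j)=\sum_{i=j+1}^{r'(j)}a_i$ and $a_j=0$, then push cell $j$, set $a_j\leftarrow 1$ and $j\leftarrow l'(j)$; otherwise set $j\leftarrow j+1$; until $j=m-2$; (4) push cell $m-2$. *)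

(* Defs.v *)
From mathcomp Require Import all_boot all_order all_algebra.
Set Implicit Arguments. Unset Strict Implicit. Unset Printing Implicit Defensive.
Import Order.TTheory GRing.Theory Num.Theory.

(* Push-to-the-top and the Block Algorithm.
   Parameters: s t m (with n = m^2 cells), cell values in a real domain R,
   the integers v(j), cells c : nat -> R (only indices < n are meaningful). *)

Section Block.
Variables (s t m : nat).

Definition ncells : nat := m ^ 2.

(* l(j) = s * ceil((j - t + 1)/s) mod n, computed in int; ceil(x/s) = -floor(-x/s). *)
Definition lZ (j : nat) : int := (s%:Z * (- ((t%:Z - 1 - j%:Z) %/ s%:Z)%Z))%R.
Definition lidx (j : nat) : nat := `|(lZ j %% (ncells%:Z))%Z|%N.

Definition ridx (j : nat) : nat := (s * (j %/ s) + t - 1) %% ncells.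

Definition lidx' (j : nat) : nat := if lidx j <= m - 3 then lidx j else 0.
Definition ridx' (j : nat) : nat := if ridx j <= m - 3 then ridx j else m - 3.

(* i (< n) lies in the cyclic window l, l+1, ..., r (indices mod n) *)
Definition in_window (l r i : nat) : bool :=
  (i + ncells - l) %% ncells <= (r + ncells - l) %% ncells.

Variable R : realDomainType.

Definition push (c : nat -> R) (j : nat) : nat -> R :=
  let l := lidx j in let r := ridx j in
  let M := \big[Num.max/c l]_(i < ncells | in_window l r i) c i in
  fun i => if i == j then (M + 1)%R else c i.

Variable v : nat -> int.

Record state := State { cells : nat -> R; flags : nat -> bool; cur : nat }.

(* one execution of the body of the repeat-loop (step 3);
   returns the new state and the pushed cell, if any *)
Definition loop_body (st : state) : state * option nat :=
  let c := cells st in let a := flags st in let j := cur st in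
  if (v j == (\sum_(j.+1 <= i < (ridx' j).+1) (a i : nat))%:Z)%R && ~~ a j then
    (State (push c j) (fun i => (i == j) || a i) (lidx' j), Some j)
  else (State c a j.+1, None).

Fixpoint run (k : nat) (st : state) : state * seq nat :=
  match k with
  | 0 => (st, [::])
  | k'.+1 => let: (st', ps) := run k' st in
             let: (st'', o) := loop_body st' in
             (st'', ps ++ (if o is Some j then [:: j] else [::]))
  end.

(* state after steps (1) and (2) *)
Definition init_state (c : nat -> R) : state :=
  State (push c (ncells - 1)) (fun _ => false) 0.

End Block.

(* Main.v *)
Require Import Defs.
From mathcomp Require Import all_boot all_order all_algebra zify.
Import Order.TTheory GRing.Theory Num.Theory.


Lemma lidxP s t m j i : 0 < s -> s <= t -> t + 2 <= m -> j <= m - 3 ->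
  lidx' s t m j <= j /\ (i < lidx' s t m j -> s * (i %/ s) + t - 1 < j).
Proof.
move=> s0 st tm jm.
rewrite /lidx' /lidx /lZ /ncells.
case: ifP => [H|_]; last by split=> //.
set y := (t%:Z - 1 - j%:Z)%R in H *.
have hy := divz_eq y s%:Z.
have hr0 : (0 <= (y %% s%:Z)%Z)%R by apply: modz_ge0; lia.
have hrs : ((y %% s%:Z)%Z < s%:Z)%R by apply: ltz_pmod; lia.
set q := (y %/ s%:Z)%Z in hy *.
set r := (y %% s%:Z)%Z in hy hr0 hrs *.
set L := (s%:Z * - q)%R in H *.
set n := (m ^ 2)%N in H *.
have hn : (3 * m <= n)%N by rewrite /n; nia.
have hL := divz_eq L n%:Z.
have he0 : (0 <= (L %% n%:Z)%Z)%R by apply: modz_ge0; lia.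
have hen : ((L %% n%:Z)%Z < n%:Z)%R by apply: ltz_pmod; lia.
set d := (L %/ n%:Z)%Z in hL *.
set e := (L %% n%:Z)%Z in hL he0 hen H *.
have ed : d = 0%R.
  rewrite /L in hL. nia.
split. nia.
move=> hi.
have hi2 := divn_eq i s.
have hi3 := ltn_pmod i s0.
have hq : ((i %/ s)%:Z + q < 0)%R.
  rewrite ltNge; apply/negP => hq.
  have : (0 <= s%:Z * ((i %/ s)%:Z + q))%R by apply: mulr_ge0; lia.
  nia.
nia.
Qed.

Lemma ridx_small s t m j : t + 2 <= m -> j <= m - 3 ->
  ridx s t m j = s * (j %/ s) + t - 1.
Proof.
move=> tm jm; rewrite /ridx /ncells modn_small //.
have := leq_trunc_div j s. rewrite mulnC. nia.
Qed.

Lemma zlem s t m i : 0 < s -> s %| m -> t + 2 <= m ->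
  i < m - s * ((t + 2 + s - 1) %/ s - 1) -> s * (i %/ s) + t - 1 <= m - 3.
Proof.
move=> s0 sm tm hi.
set p := (t + 2 + s - 1) %/ s in hi.
have hp1 := divn_eq (t + 2 + s - 1) s.
have hp2 := ltn_pmod (t + 2 + s - 1) s0.
rewrite -/p in hp1.
have [M hM] : exists M, m = M * s by exists (m %/ s); rewrite divnK.
have hi2 := divn_eq i s.
have hi3 := ltn_pmod i s0.
set q := i %/ s in hi2 *.
have hq : q + p <= M.
  rewrite leqNgt; apply/negP => hq.
  have : M * s <= (q + p - 1) * s by rewrite leq_mul2r; apply/orP; right; lia.
  nia.
have : (q + p) * s <= M * s by rewrite leq_mul2r hq orbT.
nia.
Qed.

Definition oseq (o : option nat) : seq nat := if o is Some j then [:: j] else [::].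

Lemma run_S (R : realDomainType) s t m v k (st : state R) :
  run s t m v k.+1 st =
  ((loop_body s t m v (run s t m v k st).1).1,
   (run s t m v k st).2 ++ oseq (loop_body s t m v (run s t m v k st).1).2).
Proof. by rewrite /=; case: (run s t m v k st) => a b /=; case: loop_body. Qed.

Lemma run_front (R : realDomainType) s t m v k (st : state R) :
  run s t m v k.+1 st =
  ((run s t m v k (loop_body s t m v st).1).1,
   oseq (loop_body s t m v st).2 ++ (run s t m v k (loop_body s t m v st).1).2).
Proof.
elim: k st => [|k IH] st.
  by rewrite /=; case: loop_body => a b; rewrite /= cats0.
by rewrite [LHS]run_S IH [in RHS]run_S /= catA.
Qed.

Lemma sum_push (a : nat -> bool) j lo hi : a j = false ->
  \sum_(lo <= k < hi) (((k == j) || a k) : nat) =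
  \sum_(lo <= k < hi) (a k : nat) + (lo <= j < hi).
Proof.
move=> aj; elim: hi => [|hi IH].
  by rewrite !big_geq // andbF.
case: (leqP lo hi) => h.
  rewrite !big_nat_recr //= IH.
  case: (eqVneq hi j) => [e|ne].
    subst hi; rewrite aj ltnn ltnSn h andbF /=; lia.
  have -> : (lo <= j < hi.+1) = (lo <= j < hi).
    by rewrite ltnS (leq_eqVlt j) (_ : (j == hi) = false) //; apply/eqP => e; rewrite e eqxx in ne.
  by rewrite /= addnAC.
rewrite !big_geq //; lia.
Qed.

Section Main.
Variables (R : realDomainType) (s t m : nat) (v : nat -> int).
Hypotheses (s0 : 0 < s) (st_ : s <= t) (sm : s %| m) (tm : t + 2 <= m).

Definition cnt (a : nat -> bool) i := \sum_(i.+1 <= k < (ridx' s t m i).+1) (a k : nat).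

Definition Inv (st : state R) (ps : seq nat) :=
  (forall i, flags st i = (i \in ps)) /\ uniq ps /\ all (fun i => i < m - 2) ps /\
      cur st <= m - 2 /\
      (forall i, i < m - 2 -> ~~ flags st i -> (Posz (cnt (flags st) i) <= v i)%R) /\
      (forall i, i < cur st -> ~~ flags st i -> Posz (cnt (flags st) i) != v i).

Definition mu (st : state R) (ps : seq nat) := (m - 2 - size ps) * m + (m - cur st).

Lemma ridx'_le i : ridx' s t m i <= s * (i %/ s) + t - 1.
Proof.
rewrite /ridx'; case: ifP => h; last by move/negbT: h; rewrite -ltnNge => /ltnW h;
  apply: leq_trans h (leq_mod _ _).
exact: leq_mod.
Qed.

Lemma step_inv (st : state R) ps : Inv st ps -> cur st < m - 2 ->
  Inv (loop_body s t m v st).1 (ps ++ oseq (loop_body s t m v st).2) /\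
  mu (loop_body s t m v st).1 (ps ++ oseq (loop_body s t m v st).2) < mu st ps.
Proof.
case=> hf [hu [ha [hc [h1 h2]]]] hj.
rewrite /loop_body; case: ifP => [/andP [hv hn] | hc'].
- set j := cur st in hj hv hn *; set a := flags st in hf h1 h2 hv hn *.
  have jps : j \notin ps by rewrite -hf.
  have hsz : (size (j :: ps) <= m - 2).
    rewrite -(size_iota 0 (m - 2)); apply: uniq_leq_size; first by rewrite /= jps hu.
    move=> x; rewrite inE mem_iota add0n => /orP [/eqP ->|]; first by rewrite hj.
    by move/(allP ha).
  have hjm : j <= m - 3 by lia.
  have hl := fun i => lidxP s t m j i s0 st_ tm hjm.
  have hl' : lidx' s t m j <= j by case: (hl 0).
  have cntE : forall i, cnt (fun i => (i == j) || a i) i = cnt a i + (i.+1 <= j < (ridx' s t m i).+1).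
    by move=> i; rewrite /cnt sum_push //; apply/negbTE.
  split.
  + split; [|split; [|split; [|split; [|split]]]] => /=.
    * by move=> i; rewrite hf mem_cat mem_seq1 orbC.
    * by rewrite cat_uniq hu /= andbT orbF.
    * by rewrite all_cat ha /= hj.
    * lia.
    * move=> i hi; rewrite negb_or => /andP [hij hai]; rewrite cntE.
      case: (boolP (i.+1 <= j < (ridx' s t m i).+1)) => hw; last by rewrite addn0; exact: h1.
      have hij' : i < j by case/andP: hw.
      have := h1 i hi hai; have := h2 i hij' hai; rewrite /= PoszD; lia.
    * move=> i hi; rewrite negb_or => /andP [hij hai]; rewrite cntE.
      case: (hl i) => // _ /(_ hi) H'.
      have := ridx'_le i => hr.
      have -> : (i.+1 <= j < (ridx' s t m i).+1) = false by apply/negbTE; rewrite negb_and; apply/orP; right; lia.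
      rewrite addn0; apply: h2 => //; lia.
  + rewrite /mu size_cat /= addn1; move: hsz => /= hsz; nia.
- rewrite /Inv /mu /= cats0; split.
  + split; [|split; [|split; [|split; [|split]]]] => //=.
    * move=> i; rewrite ltnS leq_eqVlt => /orP [/eqP -> hn|hi]; last exact: h2.
      by move: hc'; rewrite hn andbT eq_sym => /negbT.
  + rewrite /mu /=; lia.
Qed.


Lemma main_run mu0 (st : state R) ps : mu st ps <= mu0 -> Inv st ps -> cur st < m - 2 ->
  exists K, [/\ 0 < K, cur (run s t m v K st).1 = m - 2,
     (forall k, 0 < k < K -> cur (run s t m v k st).1 <> m - 2)
   & Inv (run s t m v K st).1 (ps ++ (run s t m v K st).2)].
Proof.
elim: mu0 st ps => [|mu0 IH] st ps hmu hI hc.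
  rewrite /mu in hmu; exfalso; nia.
have [hI1 hlt] := step_inv _ _ hI hc.
case: (eqVneq (cur (loop_body s t m v st).1) (m - 2)) => e.
  exists 1; split => //; first by rewrite run_front.
    by move=> k; lia.
  by rewrite run_front /= cats0.
have hc1 : cur (loop_body s t m v st).1 < m - 2.
  by case: hI1 => _ [_ [_ [h _]]]; rewrite ltn_neqAle e h.
have [K [K0 HK HKk HKI]] := IH _ _ (ltnSE (leq_trans hlt hmu)) hI1 hc1.
exists K.+1; split => //; first by rewrite run_front.
  case=> [|[|k]] hk; first by lia.
    by rewrite run_front /=; apply/eqP.
  by rewrite run_front; apply: HKk; lia.
by rewrite run_front /= catA.
Qed.

End Main.

Lemma all_pushed (R : realDomainType) s t m v (st : state R) ps :
  0 < s -> s <= t -> s %| m -> t + 2 <= m ->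
  (forall j, j < m -> (0 <= v j)%R /\ (v j <= t%:Z - 1 - (j %% s)%:Z)%R) ->
  (forall j, m - s * ((t + 2 + s - 1) %/ s - 1) <= j -> j < m -> v j = 0%R) ->
  Inv R s t m v st ps -> cur st = m - 2 -> forall i, i < m - 2 -> flags st i.
Proof.
move=> s0 st_ sm tm Hv Hz [hf [hu [ha [hc [h1 h2]]]]] hcur.
suff H : forall d i, i < m - 2 -> m - 2 - i <= d -> flags st i.
  by move=> i hi; apply: (H (m - 2 - i)).
elim=> [|d IH] i hi hd; first by exfalso; lia.
apply/negPn/negP => hn.
have hr : ridx' s t m i <= m - 3 by rewrite /ridx'; case: ifP.
have hri : i <= ridx' s t m i.
  rewrite /ridx'; case: ifP => _; last by lia.
  rewrite ridx_small; [|lia|lia].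
  have := divn_eq i s; have := ltn_pmod i s0.
  move: (i %/ s) (i %% s) => q r; nia.
have hcnt : cnt s t m (flags st) i = ridx' s t m i - i.
  rewrite /cnt (eq_big_nat _ _ (F2 := fun _ => 1)).
    by rewrite sum_nat_const_nat muln1 subSS.
  move=> k /andP [k1 k2]; rewrite (IH k) //; lia.
have hvb : (v i <= Posz (ridx' s t m i - i))%R.
  case: (leqP (m - s * ((t + 2 + s - 1) %/ s - 1)) i) => hz.
    rewrite Hz //; lia.
  have hz2 := zlem s t m i s0 sm tm hz.
  have hrs : ridx s t m i = s * (i %/ s) + t - 1 by apply: ridx_small; lia.
  have -> : ridx' s t m i = s * (i %/ s) + t - 1 by rewrite /ridx' hrs ifT.
  have [_ ] := Hv i (ltac:(lia)).
  have := divn_eq i s; have := ltn_pmod i s0.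
  move: (i %/ s) (i %% s) => q r; rewrite (mulnC q s).
  move: (s * q) => P; lia.
have := h1 i hi hn; have := h2 i (ltac:(lia)) hn; rewrite hcnt; lia.
Qed.

Theorem lemma8 (R : realDomainType) (s t m : nat) (v : nat -> int) (c0 : nat -> R) :
  0 < s -> 0 < t -> 0 < m -> s <= t -> s %| m -> t + 2 <= m ->
  let n := m ^ 2 in
  let z := s * ((t + 2 + s - 1) %/ s - 1) in
  (forall j, j < m -> (0 <= v j)%R /\ (v j <= t%:Z - 1 - (j %% s)%:Z)%R) ->
  (forall j, m - z <= j -> j < m -> v j = 0%R) ->
  (forall i j, i < n -> j < n -> c0 i = c0 j -> i = j) ->
  exists K : nat,
    [/\ 0 < K,
        cur (run s t m v K (init_state s t m c0)).1 = m - 2,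
        (forall k, 0 < k < K -> cur (run s t m v k (init_state s t m c0)).1 <> m - 2)
      & (forall i, i < m - 2 ->
           count_mem i (run s t m v K (init_state s t m c0)).2 = 1)].
Proof.
move=> s0 t0 m0 st_ sm tm n z Hv Hz _.
have hI : Inv R s t m v (init_state s t m c0) [::].
  split => //; split => //; split => //; split => /=; first by lia.
  split => // i hi _.
  rewrite /cnt big1 //; have [] := Hv i (ltac:(lia)); done.
have [K [K0 HK HKk HKI]] := @main_run R s t m v s0 st_ sm tm _ _ _ (leqnn _) hI (ltac:(rewrite /=; lia)).
exists K; split => // i hi.
have hf := @all_pushed R s t m v _ _ s0 st_ sm tm Hv Hz HKI HK i hi.
case: HKI => hfl [hu _].
by rewrite count_uniq_mem // -hfl hf.
Qed.
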